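(* Let $k\ge 2$ and $n$ be integers with $2k-1 \le n$. Then $$N(BM,k,n) \le N(GM,k,n)\le (n-k+1)\cdot\mathsf{m}(k-1,n-1).$$
   Context: We are given $n$ balls, the set $[n]=\{1,\dots,n\}$, each colored with one of two colors by an unknown coloring. A ball $i$ is a majority ball if more than $n/2$ balls have the same color as $i$. A query is a subset $Q\subseteq[n]$ with $|Q|=k$. In the General (Yes-No) Model (GM), the answer to a query $Q$ is YES if $Q$ contains two balls of different colors and NO otherwise. In Borzyszkowski's Model (BM), the answer is YES together with a pair of balls of $Q$ having different colors (the pair may be any such pair) if such a pair exists, and NO if all balls of $Q$ have the same color. A non-adaptive strategy is a family of queries $Q_1,\dots,Q_q$ fixed in advance. It succeeds if for every coloring and every admissible sequence of answers, the answers determine the outcome: either every coloring consistent with the answers has no majority ball, or there is a ball that is a majority ball in every coloring consistent with the answers. $N(GM,k,n)$ and $N(BM,k,n)$ denote the minimum number of queries in a successful non-adaptive strategy in the respective model. A hypergraph has Property B if its vertices can be 2-colored with no monochromatic edge. For $k\ge1$ and $n\ge 2k-1$, $\mathsf{m}(k,n)$ is the minimum number of edges of a $k$-uniform hypergraph on $n$ vertices that does not have Property B. *)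

(* Defs.v *)
From mathcomp Require Import all_boot.
From Stdlib Require Import ClassicalEpsilon.

Set Implicit Arguments.
Unset Strict Implicit.
Unset Printing Implicit Defensive.

(* Balls are 'I_n; a 2-coloring is a finite function 'I_n -> bool. *)

(* Minimum of a predicate on nat; 0 by convention if the predicate is never
   satisfied (classical choice, only used to name the minimum). *)
Definition nat_min (P : pred nat) : nat :=
  match excluded_middle_informative (exists q, P q) with
  | left h => ex_minn h
  | right _ => 0
  end.

Definition monochromatic n (c : {ffun 'I_n -> bool}) (Q : {set 'I_n}) : bool :=
  [forall x in Q, forall y in Q, c x == c y].

Definition majority n (c : {ffun 'I_n -> bool}) (i : 'I_n) : bool :=
  n < 2 * #|[set j | c j == c i]|.

Definition has_majority n (c : {ffun 'I_n -> bool}) : bool :=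
  [exists i, majority c i].

(* The answers determine the outcome, where [consistent] is the set of
   colorings consistent with the answers. *)
Definition determines n (consistent : pred {ffun 'I_n -> bool}) : bool :=
  [forall c', consistent c' ==> ~~ has_majority c']
  || [exists i, forall c', consistent c' ==> majority c' i].

Definition valid_strategy n k q (Qs : q.-tuple {set 'I_n}) : bool :=
  [forall j, #|tnth Qs j| == k].

(* General Model: answer YES iff Q contains two balls of different colors *)
Definition GM_answer n (c : {ffun 'I_n -> bool}) (Q : {set 'I_n}) : bool :=
  ~~ monochromatic c Q.

Definition successful_GM n q (Qs : q.-tuple {set 'I_n}) : bool :=
  [forall c : {ffun 'I_n -> bool},
     determines (fun c' : {ffun 'I_n -> bool} =>
       [forall j, GM_answer c' (tnth Qs j) == GM_answer c (tnth Qs j)])].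

(* Borzyszkowski's Model: an answer is None (NO) or Some (x, y) (YES with a
   pair of balls of Q of different colors). [BM_admissible c Q a] : a is an
   admissible answer to Q under coloring c. *)
Definition BM_admissible n (c : {ffun 'I_n -> bool}) (Q : {set 'I_n})
  (a : option ('I_n * 'I_n)) : bool :=
  match a with
  | None => monochromatic c Q
  | Some (x, y) => [&& x \in Q, y \in Q & c x != c y]
  end.

Definition BM_admissible_seq n q (Qs : q.-tuple {set 'I_n})
  (c : {ffun 'I_n -> bool}) (a : q.-tuple (option ('I_n * 'I_n))) : bool :=
  [forall j, BM_admissible c (tnth Qs j) (tnth a j)].

Definition successful_BM n q (Qs : q.-tuple {set 'I_n}) : bool :=
  [forall c : {ffun 'I_n -> bool}, forall a : q.-tuple (option ('I_n * 'I_n)),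
     BM_admissible_seq Qs c a ==> determines (fun c' => BM_admissible_seq Qs c' a)].

Definition N_GM (k n : nat) : nat :=
  nat_min (fun q => [exists Qs : q.-tuple {set 'I_n},
                       valid_strategy k Qs && successful_GM Qs]).

Definition N_BM (k n : nat) : nat :=
  nat_min (fun q => [exists Qs : q.-tuple {set 'I_n},
                       valid_strategy k Qs && successful_BM Qs]).

Definition propertyB n (H : {set {set 'I_n}}) : bool :=
  [exists c : {ffun 'I_n -> bool}, forall e in H, ~~ monochromatic c e].

Definition m_B (k n : nat) : nat :=
  nat_min (fun q => [exists H : {set {set 'I_n}},
                       [&& #|H| == q, [forall e in H, #|e| == k] & ~~ propertyB H]]).

(* Main.v *)
Require Import Defs.
From mathcomp Require Import all_boot.
From mathcomp Require Import zify.
From Stdlib Require Import ClassicalEpsilon.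

Set Implicit Arguments.
Unset Strict Implicit.
Unset Printing Implicit Defensive.

Lemma nat_min_le (P : pred nat) q : P q -> nat_min P <= q.
Proof.
move=> Pq; rewrite /nat_min; case: excluded_middle_informative => [h|nh].
  by case: (ex_minnP h) => m _ /(_ q Pq).
by [].
Qed.

Lemma nat_min_P (P : pred nat) : (exists q, P q) -> P (nat_min P).
Proof.
move=> ex; rewrite /nat_min; case: excluded_middle_informative => [h|nh].
  by case: (ex_minnP h).
by case: (nh ex).
Qed.

Lemma subset_of_card (T : finType) (A : {set T}) m :
  m <= #|A| -> exists B : {set T}, B \subset A /\ #|B| = m.
Proof.
elim: m => [|m IH] H.
  by exists set0; rewrite sub0set cards0.
have [B [BA cB]] := IH (ltnW H).
have : 0 < #|A :\: B| by rewrite cardsD (setIidPr BA); lia.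
rewrite card_gt0 => /set0Pn [x]; rewrite in_setD => /andP [xB xA].
exists (x |: B); split.
  by rewrite subUset sub1set xA BA.
by rewrite cardsU1 xB cB.
Qed.

Section Core.
Variable n : nat.
Implicit Types c : {ffun 'I_n -> bool}.

Lemma monoP c (Q : {set 'I_n}) :
  reflect (forall x y, x \in Q -> y \in Q -> c x = c y) (monochromatic c Q).
Proof.
apply: (iffP forallP) => [H x y xQ yQ|H x].
  by have /implyP/(_ xQ)/forallP/(_ y)/implyP/(_ yQ)/eqP := H x.
apply/implyP => xQ; apply/forallP => y; apply/implyP => yQ; apply/eqP; exact: H.
Qed.

Lemma mono_sub c (A B : {set 'I_n}) : A \subset B -> monochromatic c B -> monochromatic c A.
Proof.
move=> /subsetP AB /monoP H; apply/monoP => x y xA yA; apply: H; exact: AB.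
Qed.

Lemma mono_U1 c (e : {set 'I_n}) x w :
  monochromatic c e -> x \in e -> monochromatic c (e :|: [set w]) = (c w == c x).
Proof.
move=> /monoP me xe; apply/idP/idP.
  move/monoP => H; apply/eqP; apply: H; rewrite !inE ?eqxx ?xe ?orbT //.
move/eqP => cw.
have Ha : forall a, a \in e :|: [set w] -> c a = c x.
  by move=> a; rewrite !inE => /orP [ae|/eqP ->] //; exact: me.
apply/monoP => a b.
by move=> aQ bQ; rewrite (Ha a aQ) (Ha b bQ).
Qed.

Definition equiv c c' := forall i j, (c i == c j) = (c' i == c' j).

Lemma equiv_maj c c' i : equiv c c' -> majority c i = majority c' i.
Proof.
move=> E; rewrite /majority; congr (_ < 2 * _).
by apply: eq_card => j; rewrite !inE E.
Qed.

Lemma equiv_hasmaj c c' : equiv c c' -> has_majority c = has_majority c'.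
Proof.
move=> E; rewrite /has_majority; apply: eq_existsb => i; exact: equiv_maj.
Qed.

Variable k : nat.
Variable E : {set {set 'I_n}}.
Variable z : 'I_n.
Hypothesis k2 : 2 <= k.
Hypothesis kn : 2 * k - 1 <= n.
Hypothesis Ecard : forall e, e \in E -> #|e| = k - 1.
Hypothesis Ez : forall e, e \in E -> z \notin e.
Hypothesis Emono : forall c, exists2 e, e \in E & monochromatic c e.

Definition sameans c c' := forall e v, e \in E -> v \notin e ->
  monochromatic c (e :|: [set v]) = monochromatic c' (e :|: [set v]).

Lemma sameans_sym c c' : sameans c c' -> sameans c' c.
Proof. by move=> H e v eE ve; rewrite H. Qed.

Lemma Enonempty e : e \in E -> exists x, x \in e.
Proof.
move=> eE; have : 0 < #|e| by rewrite Ecard //; lia.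
by rewrite card_gt0 => /set0Pn.
Qed.

Lemma L1 c c' e x v : e \in E -> monochromatic c e -> x \in e -> v \notin e ->
  c v = c x -> sameans c c' -> equiv c c'.
Proof.
move=> eE me xe ve cv S.
have m1 : monochromatic c (e :|: [set v]) by rewrite (@mono_U1 c e x v me xe) cv.
have m1' : monochromatic c' (e :|: [set v]) by rewrite -S.
have me' : monochromatic c' e by apply: mono_sub m1'; exact: subsetUl.
have key : forall w, (c w == c x) = (c' w == c' x).
  move=> w; case: (boolP (w \in e)) => we.
    by rewrite (monoP _ _ me w x we xe) (monoP _ _ me' w x we xe) !eqxx.
  by rewrite -(@mono_U1 c e x w me xe) -(@mono_U1 c' e x w me' xe) S.
move=> i j.
have -> : (c i == c j) = ((c i == c x) == (c j == c x)).
  by case: (c i); case: (c j); case: (c x).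
have -> : (c' i == c' j) = ((c' i == c' x) == (c' j == c' x)).
  by case: (c' i); case: (c' j); case: (c' x).
by rewrite !key.
Qed.

Lemma L2 c e x : e \in E -> monochromatic c e -> x \in e ->
  (forall v, v \notin e -> c v != c x) -> majority c z.
Proof.
move=> eE me xe H.
have czx : c z != c x by apply: H; exact: Ez.
rewrite /majority.
have -> : [set j | c j == c z] = ~: e.
  apply/setP => j; rewrite !inE; case: (boolP (j \in e)) => je /=.
    by rewrite (monoP _ _ me j x je xe); apply/negP => /eqP h; rewrite h eqxx in czx.
  move: (H j je) czx; case: (c j); case: (c z); case: (c x) => //.
have := cardsC e; rewrite card_ord Ecard //. move: k2 kn. set t := #|~: e|. move=> a b d. have {}d : k - 1 + t = n by []. lia.
Qed.

Lemma core c (P : pred {ffun 'I_n -> bool}) :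
  (forall c', P c' -> sameans c c') -> determines P.
Proof.
move=> HP.
have [e eE me] := Emono c; have [x xe] := Enonempty eE.
case: (boolP [exists v, (v \notin e) && (c v == c x)]).
  case/existsP => v /andP [ve /eqP cv].
  have Eq : forall c', P c' -> equiv c c'.
    by move=> c' /HP S; apply: (L1 eE me xe ve cv).
  case: (boolP (has_majority c)) => hm.
    case/existsP: hm => i hi; apply/orP; right; apply/existsP; exists i.
    by apply/forallP => c'; apply/implyP => /Eq Ec; rewrite -(equiv_maj i Ec).
  apply/orP; left; apply/forallP => c'; apply/implyP => /Eq Ec.
  by rewrite -(equiv_hasmaj Ec).
rewrite negb_exists => /forallP H.
have Hc : forall v, v \notin e -> c v != c x.
  by move=> v ve; have := H v; rewrite ve.
apply/orP; right; apply/existsP; exists z; apply/forallP => c'.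
apply/implyP => /HP S.
have [e' eE' me'] := Emono c'; have [x' xe'] := Enonempty eE'.
case: (boolP [exists v, (v \notin e') && (c' v == c' x')]).
  case/existsP => v /andP [ve /eqP cv].
  have Ec := L1 eE' me' xe' ve cv (sameans_sym S).
  by rewrite (equiv_maj z Ec) (L2 eE me xe Hc).
rewrite negb_exists => /forallP H'.
apply: (L2 eE' me' xe') => v ve; have := H' v; rewrite ve //.
Qed.

End Core.

Lemma sumn_const (T : eqType) (g : T -> nat) (l : seq T) a :
  (forall x, x \in l -> g x = a) -> sumn [seq g x | x <- l] = size l * a.
Proof.
elim: l => //= x l IH H; rewrite H ?mem_head // IH ?mulSn // => y yl.
by apply: H; rewrite in_cons yl orbT.
Qed.

Lemma strategy_from n k (E : {set {set 'I_n}}) (z : 'I_n) :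
  2 <= k -> 2 * k - 1 <= n ->
  (forall e, e \in E -> #|e| = k - 1) ->
  (forall e, e \in E -> z \notin e) ->
  (forall c : {ffun 'I_n -> bool}, exists2 e, e \in E & monochromatic c e) ->
  exists2 q, q <= #|E| * (n - k + 1) &
    exists Qs : q.-tuple {set 'I_n}, valid_strategy k Qs && successful_GM Qs.
Proof.
move=> k2 kn Ecard Ez Emono.
pose s := [seq e :|: [set v] | e <- enum E, v <- enum (~: e)].
exists (size s).
  rewrite /s size_allpairs_dep (@sumn_const _ _ _ (n - k + 1)).
    by rewrite -cardE.
  move=> e; rewrite mem_enum => eE; rewrite -cardE.
  have := cardsC e; rewrite card_ord Ecard //; lia.
have memS : forall Q, Q \in s -> exists e v, [/\ e \in E, v \notin e & Q = e :|: [set v]].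
  move=> Q /allpairsPdep [e [v [eE ve ->]]].
  by exists e, v; move: eE ve; rewrite !mem_enum in_setC.
exists (in_tuple s); apply/andP; split.
  apply/forallP => j; have := mem_tnth j (in_tuple s) => /memS [e [v [eE ve ->]]].
  rewrite setUC cardsU1 ve Ecard //; apply/eqP; lia.
apply/forallP => c; apply: (@core _ _ _ _ k2 kn Ecard Ez Emono c) => c' /forallP H e v eE ve.
have Qs : e :|: [set v] \in s.
  by apply/allpairsPdep; exists e, v; rewrite !mem_enum in_setC.
case: (seq_tnthP Qs) => jj ->.
by have := H jj; rewrite /GM_answer eqb_negLR negbK => /eqP.
Qed.

Lemma determines_anti n (P1 P2 : pred {ffun 'I_n -> bool}) :
  (forall c, P2 c -> P1 c) -> determines P1 -> determines P2.
Proof.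
move=> H /orP [/forallP A|/existsP [i /forallP A]]; apply/orP; [left|right].
  by apply/forallP => c; apply/implyP => /H h; have /implyP := A c; apply.
by apply/existsP; exists i; apply/forallP => c; apply/implyP => /H h; have /implyP := A c; apply.
Qed.

Lemma BM_GM n (c : {ffun 'I_n -> bool}) Q a :
  BM_admissible c Q a -> GM_answer c Q = isSome a.
Proof.
case: a => [[x y]|] /=; last by rewrite /GM_answer => ->.
case/and3P => xQ yQ cxy; rewrite /GM_answer; apply/negP => /monoP m.
by rewrite (m x y xQ yQ) eqxx in cxy.
Qed.

Lemma GM_BM n q (Qs : q.-tuple {set 'I_n}) : successful_GM Qs -> successful_BM Qs.
Proof.
move=> /forallP S; apply/forallP => c; apply/forallP => a; apply/implyP => /forallP ad.
apply: (determines_anti _ (S c)) => c' /forallP ad'; apply/forallP => j.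
by rewrite (BM_GM (ad j)) (BM_GM (ad' j)).
Qed.

Theorem theorem9 (k n : nat) :
  2 <= k -> 2 * k - 1 <= n ->
  N_BM k n <= N_GM k n /\ N_GM k n <= (n - k + 1) * m_B (k - 1) (n - 1).
Proof.
move=> k2 kn.
have [n' en] : exists n', n = n'.+1 by exists n.-1; lia.
subst n; rewrite [n'.+1 - 1]subn1 /=.
pose H0 := [set e : {set 'I_n'} | #|e| == k - 1].
pose PB := fun q => [exists H : {set {set 'I_n'}}, [&& #|H| == q,
     [forall e in H, #|e| == k - 1] & ~~ propertyB H]].
have hB : PB (m_B (k - 1) n').
  apply: (@nat_min_P PB); exists #|H0|; apply/existsP; exists H0.
  rewrite eqxx /=; apply/andP; split.
    by apply/forallP => e; apply/implyP; rewrite inE.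
  rewrite /propertyB negb_exists; apply/forallP => d; rewrite negb_forall.
  apply/existsP.
  pose A := [set x | d x].
  have : k - 1 <= #|A| \/ k - 1 <= #|~: A|.
    have := cardsC A; rewrite card_ord; lia.
  case=> [/subset_of_card [B [BA cB]]|/subset_of_card [B [BA cB]]]; exists B;
    rewrite negb_imply inE cB eqxx negbK /=; apply/monoP => x y xB yB;
    move/subsetP: BA => BA; have := BA x xB; have := BA y yB; rewrite !inE;
    [by move=> -> ->| by move=> /negbTE -> /negbTE ->].
case/existsP: hB => H /and3P [/eqP cH unifH nB].
pose f := @widen_ord n' n'.+1 (leqnSn n').
have finj : injective f by move=> a b hab; apply: val_inj; exact: (congr1 val hab).
pose E : {set {set 'I_n'.+1}} := [set f @: (e : {set 'I_n'}) | e in H].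
have [q qb [Qs /andP [vQ sQ]]] : exists2 q, q <= #|E| * (n'.+1 - k + 1) &
    exists Qs : q.-tuple {set 'I_n'.+1}, valid_strategy k Qs && successful_GM Qs.
  apply: (@strategy_from _ _ E ord_max k2 kn).
  - move=> e' /imsetP [e eH ->]; rewrite card_imset //.
    by have /implyP/(_ eH)/eqP := (forallP unifH) e.
  - move=> e' /imsetP [e eH ->]; apply/imsetP => [[y _ hy]].
    by have := congr1 val hy => /= hy'; have := ltn_ord y; rewrite -hy' ltnn.
  - move=> c.
    pose d := [ffun y => c (f y)].
    move: nB; rewrite /propertyB negb_exists => /forallP /(_ d).
    rewrite negb_forall => /existsP [e]; rewrite negb_imply negbK => /andP [eH me].
    exists (f @: e); first by apply/imsetP; exists e.
    apply/monoP => x y /imsetP [a ae ->] /imsetP [b be ->].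
    by have := monoP _ _ me a b ae be; rewrite !ffunE.
have bnd : q <= (n'.+1 - k + 1) * m_B (k - 1) n'.
  apply: (leq_trans qb); rewrite mulnC leq_mul2l -cH leq_imset_card orbT //.
split; last first.
  apply: leq_trans bnd; apply: nat_min_le; apply/existsP; exists Qs; rewrite vQ sQ.
  by [].
pose PG := fun q => [exists Qs : q.-tuple {set 'I_n'.+1},
             valid_strategy k Qs && successful_GM Qs].
have hG : PG (N_GM k n'.+1).
  by apply: (@nat_min_P PG); exists q; apply/existsP; exists Qs; rewrite vQ sQ.
case/existsP: hG => Qs' /andP [v' s'].
by apply: nat_min_le; apply/existsP; exists Qs'; rewrite v' GM_BM.
Qed.
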